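(* In the curved-exam game described in the context, fix a student $i$, an opponent profile $x_{-i}\in[0,1]^{n-1}$, an effort $x_i\in[0,1)$ and $\Delta x_i>0$ with $x_i+\Delta x_i<1$. Regard the difference $$\Delta\log U_i:=\log U_i(x_i+\Delta x_i,x_{-i};\alpha,m)-\log U_i(x_i,x_{-i};\alpha,m)$$ as a function of the parameters $(\alpha,m)=(\alpha_1,\dots,\alpha_n,m)\in(0,1)^{n+1}$. Then $\Delta\log U_i$ is non-increasing in the target mean $m$ and non-decreasing in each ability parameter $\alpha_j$, $j=1,\dots,n$ (wherever it is defined).
   Context: The curved-exam game: fix $n\ge2$, abilities $\alpha=(\alpha_1,\dots,\alpha_n)\in(0,1)^n$, target mean $m\in(0,1)$. Student $i$ chooses $x_i\in[0,1]$; $\bar x=\frac1n\sum_j x_j$, $\bar x_{-i}=\frac1{n-1}\sum_{j\neq i}x_j$. Grade $G_i(x;m)=x_i+\max(m-\bar x,0)$ (not truncated at 1); payoff $U_i(x;\alpha,m)=G_i(x;m)^{\alpha_i}(1-x_i)^{1-\alpha_i}$, with $\log 0=-\infty$. *)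

(* Defs.v *)
(* R : realType, extended reals for log 0 = -oo. *)
From HB Require Import structures.
From mathcomp Require Import all_boot all_order all_algebra.
From mathcomp Require Import all_classical all_reals all_analysis.
Set Implicit Arguments. Unset Strict Implicit. Unset Printing Implicit Defensive.
Import Order.TTheory GRing.Theory Num.Theory.
Local Open Scope ring_scope.

Definition elog (R : realType) (t : R) : \bar R :=
  if 0 < t then (ln t)%:E else -oo%E.

Definition upd (R : realType) (n : nat) (x : 'I_n -> R) (i : 'I_n) (y : R)
  : 'I_n -> R := fun j => if j == i then y else x j.

Definition mean (R : realType) (n : nat) (x : 'I_n -> R) : R :=
  (\sum_(j < n) x j) / n%:R.

(* grade G_i(x;m) = x_i + max(m - xbar, 0)  (not truncated) *)
Definition grade (R : realType) (n : nat) (x : 'I_n -> R) (i : 'I_n) (m : R) : R :=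
  x i + Num.max (m - mean x) 0.

Definition logU (R : realType) (n : nat) (x : 'I_n -> R) (i : 'I_n)
  (alpha : 'I_n -> R) (m : R) : \bar R :=
  ((alpha i)%:E * elog (grade x i m) + (1 - alpha i)%:E * elog (1 - x i))%E.

Definition dlogU (R : realType) (n : nat) (x : 'I_n -> R) (i : 'I_n)
  (xi dx : R) (alpha : 'I_n -> R) (m : R) : \bar R :=
  (logU (upd x i (xi + dx)) i alpha m - logU (upd x i xi) i alpha m)%E.

(* Main.v *)
Require Import Defs.
From HB Require Import structures.
From mathcomp Require Import all_boot all_order all_algebra.
From mathcomp Require Import all_classical all_reals all_analysis.
From mathcomp Require Import ring lra.
Import Order.TTheory GRing.Theory Num.Theory.
Local Open Scope ring_scope.

Lemma form (R : realType) (a G1 G0 p1 p0 : R) : 0 < a -> a < 1 -> 0 < G1 -> 0 < p1 -> 0 < p0 ->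
  ((a%:E * elog G1 + (1-a)%:E * elog p1) - (a%:E * elog G0 + (1-a)%:E*elog p0))%E =
  if 0 < G0 then (a*(ln G1 - ln G0) + (1-a)*(ln p1 - ln p0))%:E else +oo%E.
Proof.
move=> a0 a1 g1 q1 q0; rewrite /elog g1 q1 q0.
case: ifP => g0.
  rewrite -!EFinM -!EFinD; congr (_%:E); ring.
by rewrite (mulrNy a) gtr0_sg // mul1e addNye -EFinM -EFinM -EFinD.
Qed.

Lemma maxc {R : realType} (c : R) : (Num.max c 0 = c /\ 0 <= c) \/ (Num.max c 0 = 0 /\ c <= 0).
Proof. rewrite maxEle; case: ifP => h; [right|left]; split => //. 
by apply: ltW; rewrite ltNge h. Qed.

Lemma key {R : realType} (xi dx d c c' : R) : 0 <= xi -> 0 < d -> d <= dx -> c <= c' ->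
  (xi+dx+Num.max (c'-d) 0)*(xi+Num.max c 0) <= (xi+dx+Num.max (c-d) 0)*(xi+Num.max c' 0).
Proof.
move=> h1 h2 h3 h4.
case: (maxc c) => -[-> ?]; case: (maxc c') => -[-> ?];
case: (maxc (c-d)) => -[-> ?]; case: (maxc (c'-d)) => -[-> ?]; nra.
Qed.

Lemma key2 {R : realType} (xi dx d c : R) : 0 < d -> d <= dx ->
  xi+Num.max c 0 <= xi+dx+Num.max (c-d) 0.
Proof.
move=> h2 h3.
case: (maxc c) => -[-> ?]; case: (maxc (c-d)) => -[-> ?]; lra.
Qed.

Lemma grade_upd (R : realType) (n : nat) (x : 'I_n -> R) i y m :
  grade (upd x i y) i m = y + Num.max (m - ((\sum_(j < n | j != i) x j) + y) / n%:R) 0.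
Proof.
rewrite /grade /mean /upd eqxx (bigD1 i) //= eqxx addrC; congr (_ + Num.max (_ - (_ + _)/_) _).
by apply: eq_bigr => j /negPf ->.
Qed.

Lemma lnle {R : realType} {u v : R} : 0 < u -> u <= v -> ln u <= ln v.
Proof. by move=> u0 uv; rewrite ler_ln // posrE //; apply: lt_le_trans uv. Qed.

Lemma lnM' {R : realType} (u v : R) : 0 < u -> 0 < v -> ln (u * v) = ln u + ln v.
Proof. by move=> u0 v0; rewrite lnM // posrE. Qed.

Theorem mainTheorem3 (R : realType) (n : nat) (i : 'I_n)
  (x : 'I_n -> R) (xi dx : R) :
  (2 <= n)%N ->
  (forall j, j != i -> 0 <= x j <= 1) ->
  0 <= xi -> xi < 1 -> 0 < dx -> xi + dx < 1 ->
  (* non-increasing in the target mean m *)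
  (forall (alpha : 'I_n -> R) (m m' : R),
     (forall j, 0 < alpha j < 1) -> 0 < m < 1 -> 0 < m' < 1 -> m <= m' ->
     (dlogU x i xi dx alpha m' <= dlogU x i xi dx alpha m)%E)
  /\
  (* non-decreasing in each ability alpha_j *)
  (forall (alpha : 'I_n -> R) (m : R) (j : 'I_n) (a a' : R),
     (forall k, 0 < alpha k < 1) -> 0 < m < 1 ->
     0 < a < 1 -> 0 < a' < 1 -> a <= a' ->
     (dlogU x i xi dx (upd alpha j a) m <= dlogU x i xi dx (upd alpha j a') m)%E).
Proof.
move=> n2 _ xi0 xi1 dx0 xd1.
set S := \sum_(j < n | j != i) x j.
set N : R := n%:R.
have N1 : 1 <= N by rewrite /N ler1n; apply: leq_trans n2.
have N0 : 0 < N by lra.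
set d := dx / N.
have d0 : 0 < d by rewrite /d divr_gt0.
have ddx : d <= dx by rewrite /d ler_pdivrMr //; nra.
have G1 m : grade (upd x i (xi+dx)) i m = xi + dx + Num.max ((m - (S + xi)/N) - d) 0.
  by rewrite grade_upd -/S -/N /d; congr (_ + Num.max _ 0); ring.
have G0 m : grade (upd x i xi) i m = xi + Num.max (m - (S + xi)/N) 0.
  by rewrite grade_upd.
have updi y : upd x i y i = y by rewrite /upd eqxx.
have E b m : 0 < b -> b < 1 -> dlogU x i xi dx (fun _ => b) m =
   let c := m - (S + xi)/N in
   if 0 < xi + Num.max c 0 then
     (b * (ln (xi + dx + Num.max (c - d) 0) - ln (xi + Num.max c 0)) +
      (1 - b) * (ln (1 - (xi + dx)) - ln (1 - xi)))%:E else +oo%E.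
  move=> b0 b1; rewrite /dlogU /logU G1 G0 !updi form //. all: try lra.
  by case: (maxc (m - (S + xi) / N - d)) => -[-> ?]; lra.
have Ealpha alpha m : dlogU x i xi dx alpha m = dlogU x i xi dx (fun _ => alpha i) m by [].
split.
  move=> alpha m m' ha hm hm' mm.
  have /andP[a0 a1] := ha i.
  rewrite Ealpha E // [X in (_ <= X)%E]Ealpha E //=.
  set c := m - (S + xi)/N; set c' := m' - (S + xi)/N.
  have cc : c <= c' by rewrite /c /c'; lra.
  have [g0|g0] := boolP (0 < xi + Num.max c 0); last by rewrite leey.
  have g0' : 0 < xi + Num.max c' 0.
    by move: g0; case: (maxc c) => -[-> ?]; case: (maxc c') => -[-> ?]; lra.
  rewrite g0' lee_fin.
  have K := @key _ xi dx d c c' xi0 d0 ddx cc.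
  have P1 : 0 < xi + dx + Num.max (c' - d) 0.
    by case: (maxc (c' - d)) => -[-> ?]; lra.
  have P2 : 0 < xi + dx + Num.max (c - d) 0.
    by case: (maxc (c - d)) => -[-> ?]; lra.
  have L := lnle (mulr_gt0 P1 g0) K.
  rewrite !lnM' // in L.
  nra.
move=> alpha m j a a' ha hm ha' ha'' aa.
rewrite Ealpha E; last 2 first.
  by rewrite /upd; case: eqP => _; [case/andP: ha' | case/andP: (ha i)].
  by rewrite /upd; case: eqP => _; [case/andP: ha' | case/andP: (ha i)].
rewrite [X in (_ <= X)%E]Ealpha E; last 2 first.
  by rewrite /upd; case: eqP => _; [case/andP: ha'' | case/andP: (ha i)].
  by rewrite /upd; case: eqP => _; [case/andP: ha'' | case/andP: (ha i)].
have bb : upd alpha j a i <= upd alpha j a' i by rewrite /upd; case: eqP.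
have b1 : upd alpha j a i < 1.
  by rewrite /upd; case: eqP => _; [case/andP: ha' | case/andP: (ha i)].
have b1' : upd alpha j a' i < 1.
  by rewrite /upd; case: eqP => _; [case/andP: ha'' | case/andP: (ha i)].
move: bb b1 b1'; set b := upd alpha j a i; set b' := upd alpha j a' i => bb b1 b1' /=.
set c := m - (S + xi)/N.
case: ifP => g0; last by rewrite lexx.
rewrite lee_fin.
have L1 := lnle g0 (@key2 _ xi dx d c d0 ddx).
have L2 : ln (1 - (xi + dx)) <= ln (1 - xi) by apply: lnle; lra.
nra.
Qed.
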